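(* Let $p$ be a prime and $0<\alpha\leq 1$. Then the generic $\alpha$-complexity of the whole field $\mathbb{Z}_p$ satisfies $$\sqrt{2\alpha p}<\mathcal{C}_{\alpha}(\mathbb{Z}_p)\leq 2\lceil\sqrt{\alpha p}\rceil.$$
   Context: $\mathbb{Z}_p$ denotes the field of residues modulo the prime $p$. For a set of pairs $L\subseteq\mathbb{Z}_p^2$, its intersection set is $I(L)=\{x\in\mathbb{Z}_p\mid \exists (a,b),(a',b')\in L \text{ with } (a,b)\neq(a',b') \text{ and } ax+b=a'x+b'\}$. For $S\subseteq\mathbb{Z}_p$ and $0<\alpha\leq1$, the generic $\alpha$-complexity $\mathcal{C}_\alpha(S)$ is the smallest cardinality of a set $L\subseteq\mathbb{Z}_p^2$ with $|S\cap I(L)|\geq\alpha|S|$. *)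

(* Defs.v *)
From mathcomp Require Import all_boot all_order all_algebra.
From mathcomp Require Import reals.
Set Implicit Arguments. Unset Strict Implicit. Unset Printing Implicit Defensive.
Import Order.TTheory GRing.Theory Num.Theory.
Local Open Scope ring_scope.

(* Intersection set I(L) of a set of pairs (a,b) representing lines x |-> a x + b
   over the prime field 'F_p. *)
Definition intersection_set (p : nat) (L : {set 'F_p * 'F_p}) : {set 'F_p} :=
  [set x : 'F_p | [exists l1 in L, exists l2 in L,
     (l1 != l2) && (l1.1 * x + l1.2 == l2.1 * x + l2.2)]].

Definition covers (R : realType) (p : nat) (alpha : R) (S : {set 'F_p})
    (L : {set 'F_p * 'F_p}) : Prop :=
  alpha * (#|S|%:R) <= (#|S :&: intersection_set L|%:R).

Definition is_generic_complexity (R : realType) (p : nat) (alpha : R)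
    (S : {set 'F_p}) (c : nat) : Prop :=
  (exists L : {set 'F_p * 'F_p}, #|L| = c /\ covers alpha S L) /\
  (forall L : {set 'F_p * 'F_p}, covers alpha S L -> (c <= #|L|)%N).

(* Main.v *)
Require Import Defs.
From mathcomp Require Import all_boot all_order all_algebra.
From mathcomp Require Import reals.
From mathcomp Require Import ring.
Import Order.TTheory GRing.Theory Num.Theory.
Local Open Scope ring_scope.

Lemma line_uniq (p : nat) (l1 l2 : 'F_p * 'F_p) (x y : 'F_p) :
  l1 != l2 -> l1.1 * x + l1.2 = l2.1 * x + l2.2 ->
  l1.1 * y + l1.2 = l2.1 * y + l2.2 -> x = y.
Proof.
case: l1 l2 => a1 b1 [a2 b2] /= ne e1 e2.
have : (a1 - a2) * (x - y) = 0.
  have -> : (a1 - a2) * (x - y) = (a1*x+b1 - (a2*x+b2)) - (a1*y+b1 - (a2*y+b2)) by ring.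
  by rewrite e1 e2 !subrr.
move/eqP; rewrite mulf_eq0 => /orP[|]; rewrite subr_eq0 => /eqP h.
  subst a2; move: e1 => /addrI e; subst b2; by rewrite eqxx in ne.
by [].
Qed.

Lemma card_I (p : nat) (L : {set 'F_p * 'F_p}) :
  (#|intersection_set L| <= 'C(#|L|, 2))%N.
Proof.
pose psi (A : {set 'F_p * 'F_p}) := odflt 0
  [pick x | [forall l1 in A, forall l2 in A, l1.1*x+l1.2 == l2.1*x+l2.2]].
rewrite -cards_draws.
apply: leq_trans (leq_imset_card psi _).
apply: subset_leq_card; apply/subsetP => x; rewrite inE.
move=> /existsP[l1 /andP[l1L /existsP[l2 /andP[l2L /andP[ne /eqP e]]]]].
apply/imsetP; exists [set l1; l2].
  by rewrite inE subUset !sub1set l1L l2L cards2 ne.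
rewrite /psi; case: pickP => [y /forallP Hy|/(_ x) H] /=.
  have := Hy l1; rewrite !inE eqxx /= => /forallP /(_ l2).
  rewrite !inE eqxx orbT /= => /eqP e'.
  exact: line_uniq ne e e'.
move: H; have -> // : [forall l0 in [set l1; l2], forall l3 in [set l1; l2],
    l0.1 * x + l0.2 == l3.1 * x + l3.2].
apply/forallP => u; apply/implyP; rewrite !inE => /orP[]/eqP->;
apply/forallP => v; apply/implyP; rewrite !inE => /orP[]/eqP->;
by rewrite ?e eqxx.
Qed.

Lemma lower (R : realType) (p : nat) (alpha : R) (L : {set 'F_p * 'F_p}) :
  prime p -> 0 < alpha -> covers alpha [set: 'F_p] L ->
  Num.sqrt (2 * alpha * p%:R) < #|L|%:R.
Proof.
move=> pr a0; rewrite /covers cardsT card_Fp // setTI => cov.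
set n := #|L|.
have hC : alpha * p%:R <= ('C(n, 2))%:R.
  by apply: le_trans cov _; rewrite ler_nat card_I.
have h2 : (2 * 'C(n, 2) <= n * n.-1)%N.
  by rewrite bin2 mul2n halfK leq_subr.
have Cpos : (0 < 'C(n, 2))%N.
  have : (0 : R) < ('C(n, 2))%:R.
    by apply: lt_le_trans hC; rewrite mulr_gt0 // ltr0n prime_gt0.
  by rewrite ltr0n.
have npos : (0 < n)%N by rewrite lt0n; apply: contraTneq Cpos => ->; rewrite bin0n.
have h3 : (2 * 'C(n, 2) < n * n)%N.
  apply: leq_ltn_trans h2 _.
  by rewrite ltn_pmul2l // prednK // ltnSn.
have h4 : 2 * alpha * p%:R < (n%:R) ^+ 2.
  rewrite -mulrA expr2 -natrM.
  apply: le_lt_trans (_ : 2 * ('C(n, 2))%:R < _).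
    by rewrite ler_pM2l.
  by rewrite -[2]/(2%:R) -natrM ltr_nat.
have -> : (n%:R : R) = Num.sqrt (n%:R ^+ 2) by rewrite sqrtr_sqr ger0_norm ?ler0n.
rewrite ltr_sqrt //.
by rewrite exprn_gt0 // ltr0n.
Qed.

Definition L0 (p k : nat) : {set 'F_p * 'F_p} :=
  ((fun i : 'I_k => ((0 : 'F_p), ((i * k)%N%:R : 'F_p))) @: setT) :|:
  ((fun j : 'I_k => ((1 : 'F_p), - (j%:R : 'F_p))) @: setT).

Lemma card_L0 p k : (#|L0 p k| <= k + k)%N.
Proof.
rewrite /L0 cardsU; apply: leq_trans (leq_subr _ _) _.
apply: leq_add; apply: leq_trans (leq_imset_card _ _) _; by rewrite cardsT card_ord.
Qed.

Lemma L0_inter p k (m : nat) : prime p -> (m < k * k)%N ->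
  (m%:R : 'F_p) \in intersection_set (L0 p k).
Proof.
move=> pr hm.
have kpos : (0 < k)%N by case: k hm.
have ilt : (m %/ k < k)%N by rewrite ltn_divLR.
have jlt : (m %% k < k)%N by rewrite ltn_mod.
rewrite inE; apply/existsP; exists ((0 : 'F_p), (((m %/ k) * k)%N%:R : 'F_p)).
rewrite /L0 !inE; apply/andP; split; rewrite ?inE.
  by apply/orP; left; apply/imsetP; exists (Ordinal ilt).
apply/existsP; exists ((1 : 'F_p), - ((m %% k)%:R : 'F_p)).
apply/andP; split; rewrite ?inE.
  by apply/orP; right; apply/imsetP; exists (Ordinal jlt).
apply/andP; split; rewrite ?inE.
  by rewrite xpair_eqE eq_sym oner_eq0.
rewrite /= mul0r add0r mul1r.
have -> : (m%:R : 'F_p) = ((m %/ k * k)%N%:R + (m %% k)%:R) by rewrite -natrD -divn_eq.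
by rewrite addrK.
Qed.

Lemma L0_card_inter p k : prime p ->
  (minn (k * k) p <= #|intersection_set (L0 p k)|)%N.
Proof.
move=> pr.
set m0 := minn (k * k) p.
pose T := [set ((val m)%:R : 'F_p) | m : 'I_m0].
have -> : m0 = #|T|.
  rewrite card_imset ?card_ord // => a b /eqP.
  have ap : (val a < p)%N by apply: leq_trans (ltn_ord a) (geq_minr _ _).
  have bp : (val b < p)%N by apply: leq_trans (ltn_ord b) (geq_minr _ _).
  rewrite -val_eqE /= !val_Fp_nat // !modn_small // => /eqP h.
  exact: val_inj.
apply: subset_leq_card; apply/subsetP => x /imsetP[m _ ->].
apply: L0_inter => //.
exact: leq_trans (ltn_ord m) (geq_minl _ _).
Qed.

Theorem proposition2 (R : realType) (p : nat) (alpha : R) :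
  prime p -> 0 < alpha -> alpha <= 1 ->
  exists c : nat, is_generic_complexity alpha [set: 'F_p] c /\
    Num.sqrt (2 * alpha * p%:R) < c%:R /\
    (c%:R : R) <= 2 * (Num.ceil (Num.sqrt (alpha * p%:R)))%:~R.
Proof.
move=> pr a0 a1.
set z := Num.ceil (Num.sqrt (alpha * p%:R)).
have z0 : (0 <= z)%R.
  by rewrite ceil_ge0; apply: lt_le_trans (sqrtr_ge0 _); rewrite ltrN10.
set k := `|z|%N.
have kz : (k%:R : R) = z%:~R by rewrite natr_absz ger0_norm.
have sk : Num.sqrt (alpha * p%:R) <= k%:R by rewrite kz ceil_ge.
have apk : alpha * p%:R <= (k * k)%N%:R.
  have ap0 : 0 <= alpha * p%:R by rewrite mulr_ge0 // ltW.
  rewrite -(sqr_sqrtr ap0) natrM expr2.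
  by apply: ler_pM => //; apply: sqrtr_ge0.
pose cov (L : {set 'F_p * 'F_p}) : bool :=
  alpha * (#|[set: 'F_p]|%:R) <= (#|[set: 'F_p] :&: intersection_set L|%:R).
have cov0 : cov (L0 p k).
  rewrite /cov cardsT card_Fp // setTI.
  apply: le_trans (_ : (minn (k * k) p)%:R <= _); last first.
    by rewrite ler_nat L0_card_inter.
  case: (leqP (k * k) p) => h.
    by [].
  by rewrite -[X in _ <= X]mul1r ler_wpM2r.
case: (@arg_minnP _ _ cov (fun L : {set 'F_p * 'F_p} => #|L|) cov0) => Lm covLm minLm.
exists #|Lm|; split; [split|split].
- by exists Lm.
- by move=> L cL; apply: minLm.
- exact: lower.
- rewrite -kz -[2]/(2%:R) -natrM ler_nat mul2n -addnn.
  by apply: leq_trans (minLm _ cov0) (card_L0 p k).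
Qed.
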